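(* Let $d,a,b$ be positive integers, $r=(d+2b)/d$, $R=(a+d)/d$, with $R\ge3r$, and let $\rho=x_1-r$ with $x_1$ as in the context. On the upper semicircle $t(x)=x+i\sqrt{\rho^2-(x-r)^2}$, $r-\rho\le x\le r+\rho$, the function $x\mapsto\Phi(t(x))$ is strictly increasing (for $x$ where $t(x)\ne r$, i.e. on the whole semicircle).
   Context: For $t\in\mathbb C\setminus\{\pm1,\pm r\}$ let $\Phi(t)=d\log|t+r|-d\log|t-r|+(a+d)(\log|t-1|-\log|t+1|)$. Under $R\ge3r$ there is a unique $x_1\in(r,\infty)$ with $\Phi(x_1)=0$. *)

(* Defs.v *)
(* classical reals. Complex numbers t = u + i v are represented
   by their real and imaginary parts (u, v); |t - c| for real c is
   sqrt ((u - c)^2 + v^2). *)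
From Stdlib Require Import Reals.
Open Scope R_scope.

Definition cabs_shift (u v c : R) : R := sqrt ((u - c) ^ 2 + v ^ 2).

(* Phi(t) = d log|t+r| - d log|t-r| + (a+d)(log|t-1| - log|t+1|), t = u + i v *)
Definition Phi (d a r u v : R) : R :=
  d * ln (cabs_shift u v (- r)) - d * ln (cabs_shift u v r)
  + (a + d) * (ln (cabs_shift u v 1) - ln (cabs_shift u v (-1))).

Definition semi_im (r rho x : R) : R := sqrt (rho ^ 2 - (x - r) ^ 2).

(* Main.v *)
Require Import Defs.
From Stdlib Require Import Reals Lra Psatz.
Open Scope R_scope.

Lemma ln_le_sub1 (y : R) : 0 < y -> ln y <= y - 1.
Proof. intro H. pose proof (exp_ineq1_le (ln y)). rewrite exp_ln in H0; lra. Qed.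

Lemma ln_sqrt2 (z : R) : 0 < z -> ln (sqrt z) = ln z / 2.
Proof.
  intro H. assert (Hs := sqrt_lt_R0 z H).
  rewrite <- (sqrt_sqrt z) at 2 by lra. rewrite ln_mult by lra. lra.
Qed.

Lemma cabs_ln (u v c : R) : 0 < (u - c) ^ 2 + v ^ 2 ->
  ln (cabs_shift u v c) = ln ((u - c) ^ 2 + v ^ 2) / 2.
Proof. intro H; unfold cabs_shift; apply ln_sqrt2; exact H. Qed.

Lemma ln_diff_le (p q : R) : 0 < p -> 0 < q -> ln p - ln q <= p / q - 1.
Proof.
  intros Hp Hq. assert (Hpq : 0 < p / q) by (apply Rdiv_lt_0_compat; lra).
  pose proof (ln_le_sub1 _ Hpq). unfold Rdiv in *.
  rewrite ln_mult in H by (try apply Rinv_0_lt_compat; lra).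
  rewrite ln_Rinv in H by lra. lra.
Qed.

Lemma sq_ln (u : R) : 0 < u -> ln (u ^ 2 + 0 ^ 2) / 2 = ln u.
Proof.
  intro H. replace (u ^ 2 + 0 ^ 2) with (u * u) by ring.
  rewrite ln_mult by lra. lra.
Qed.

Theorem lemma4p11 (d a b : nat) (x1 : R) :
  (0 < d)%nat -> (0 < a)%nat -> (0 < b)%nat ->
  let r := (INR d + 2 * INR b) / INR d in
  let Rb := (INR a + INR d) / INR d in
  Rb >= 3 * r ->
  r < x1 -> Phi (INR d) (INR a) r x1 0 = 0 ->
  let rho := x1 - r in
  forall x y : R,
    r - rho <= x -> x < y -> y <= r + rho ->
    Phi (INR d) (INR a) r x (semi_im r rho x) <
    Phi (INR d) (INR a) r y (semi_im r rho y).
Proof.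
  intros Hd Ha Hb r Rb HR Hx1 HPhi rho x y Hx Hxy Hy.
  assert (HD : 0 < INR d) by (apply lt_0_INR; lia).
  assert (HA : 0 < INR a) by (apply lt_0_INR; lia).
  assert (HB : 0 < INR b) by (apply lt_0_INR; lia).
  set (D := INR d) in *. set (A := INR a) in *.
  assert (Hr1 : r - 1 = 2 * INR b / D) by (unfold r; field; lra).
  assert (Hr : 1 < r).
  { assert (0 < 2 * INR b / D) by (apply Rdiv_lt_0_compat; lra). lra. }
  assert (HAD : A + D >= 3 * r * D).
  { unfold Rb in HR. apply Rge_le in HR. apply Rle_ge.
    apply (Rmult_le_compat_r D) in HR; [|lra].
    replace ((A + D) / D * D) with (A + D) in HR by (field; lra). lra. }
  clearbody Rb r.
  assert (Hrho : x1 < 2 * r - 1).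
  { destruct (Rlt_or_le x1 (2 * r - 1)) as [H|H]; [exact H|exfalso].
    unfold Phi in HPhi.
    rewrite !cabs_ln in HPhi by nra.
    replace (x1 - - r) with (x1 + r) in HPhi by ring.
    replace (x1 - - (1)) with (x1 + 1) in HPhi by ring.
    rewrite !sq_ln in HPhi by lra.
    set (L := ln (x1 + 1) - ln (x1 - 1)).
    assert (H1 := ln_diff_le (x1 + r) (x1 + 1) ltac:(lra) ltac:(lra)).
    assert (H2 := ln_diff_le (x1 - 1) (x1 - r) ltac:(lra) ltac:(lra)).
    assert (H3 := ln_diff_le (x1 - 1) (x1 + 1) ltac:(lra) ltac:(lra)).
    assert (E1 : (x1 + r) / (x1 + 1) - 1 = (r - 1) / (x1 + 1)) by (field; lra).
    assert (E2 : (x1 - 1) / (x1 - r) - 1 = (r - 1) / (x1 - r)) by (field; lra).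
    assert (E3 : (x1 - 1) / (x1 + 1) - 1 = - (2 / (x1 + 1))) by (field; lra).
    rewrite E1 in H1. rewrite E2 in H2. rewrite E3 in H3.
    assert (Key : (r - 1) / (x1 + 1) + (r - 1) / (x1 - r) < (3 * r - 1) * (2 / (x1 + 1))).
    { assert (Q : (3 * r - 1) * (2 / (x1 + 1)) - ((r - 1) / (x1 + 1) + (r - 1) / (x1 - r))
                 = ((5 * r - 1) * (x1 - r) - (r - 1) * (x1 + 1)) / ((x1 + 1) * (x1 - r)))
        by (field; lra).
      assert (0 < ((5 * r - 1) * (x1 - r) - (r - 1) * (x1 + 1)) / ((x1 + 1) * (x1 - r))).
      { apply Rdiv_lt_0_compat; [nra|]. apply Rmult_lt_0_compat; lra. }
      lra. }
    assert (HL : 2 / (x1 + 1) <= L) by (unfold L; lra).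
    assert (Hpos : 0 < 2 / (x1 + 1)) by (apply Rdiv_lt_0_compat; lra).
    assert (Hlr : ln (x1 + r) - ln (x1 - r) < 3 * r * L).
    { assert ((3 * r - 1) * (2 / (x1 + 1)) <= (3 * r - 1) * L) by (apply Rmult_le_compat_l; lra).
      unfold L in *; lra. }
    assert (D * (ln (x1 + r) - ln (x1 - r)) < D * (3 * r * L)) by (apply Rmult_lt_compat_l; lra).
    assert ((3 * r * D) * L <= (A + D) * L) by (apply Rmult_le_compat_r; lra).
    assert (HP : D * (ln (x1 + r) - ln (x1 - r)) - (A + D) * L = 0)
      by (rewrite <- HPhi; unfold L; replace (x1 - -1) with (x1 + 1) by ring; ring).
    lra. }
  assert (Hrho0 : 0 < rho) by (unfold rho; lra).
  assert (Hx1' : 1 < x) by (unfold rho in *; lra).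
  assert (Sq : forall z, r - rho <= z <= r + rho -> semi_im r rho z ^ 2 = rho ^ 2 - (z - r) ^ 2).
  { intros z Hz. unfold semi_im. rewrite pow2_sqrt; [reflexivity|]. nra. }
  assert (Ex : forall z c, r - rho <= z <= r + rho ->
             (z - c) ^ 2 + semi_im r rho z ^ 2 = rho ^ 2 + (r - c) * (2 * z - r - c)).
  { intros z c Hz. rewrite Sq by exact Hz. ring. }
  assert (Phiz : forall z, r - rho <= z <= r + rho ->
     Phi D A r z (semi_im r rho z) =
       D * (ln (rho ^ 2 + 4 * r * z) / 2) - D * (ln (rho ^ 2) / 2)
       + (A + D) * (ln (rho ^ 2 + (r - 1) * (2 * z - r - 1)) / 2
                    - ln (rho ^ 2 + (r + 1) * (2 * z - r + 1)) / 2)).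
  { intros z Hz. unfold Phi.
    assert (Pc : forall c, c < z -> 0 < (z - c) ^ 2 + semi_im r rho z ^ 2).
    { intros c Hc. pose proof (pow2_ge_0 (semi_im r rho z)). nra. }
    assert (Pr : 0 < (z - r) ^ 2 + semi_im r rho z ^ 2) by (rewrite Ex by exact Hz; replace (r - r) with 0 by ring;
         rewrite Rmult_0_l, Rplus_0_r; apply pow_lt; exact Hrho0).
    assert (Hz1 : 1 < z) by (unfold rho in *; lra).
    rewrite (cabs_ln z _ r Pr).
    rewrite (cabs_ln z _ (-r)) by (apply Pc; lra).
    rewrite (cabs_ln z _ 1) by (apply Pc; lra).
    rewrite (cabs_ln z _ (-1)) by (apply Pc; lra).
    rewrite !Ex by exact Hz.
    replace (r - - r) with (2 * r) by ring. replace (r - r) with 0 by ring.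
    replace (r - - (1)) with (r + 1) by ring.
    replace (rho ^ 2 + 2 * r * (2 * z - r - - r)) with (rho ^ 2 + 4 * r * z) by ring.
    replace (rho ^ 2 + 0 * (2 * z - r - r)) with (rho ^ 2) by ring.
    replace (r - -1) with (r + 1) by ring.
    replace (2 * z - r - -1) with (2 * z - r + 1) by ring. reflexivity. }
  rewrite !Phiz by lra.
  assert (P1 : ln (rho ^ 2 + 4 * r * x) < ln (rho ^ 2 + 4 * r * y))
    by (apply ln_increasing; nra).
  set (Ax := rho ^ 2 + (r - 1) * (2 * x - r - 1)).
  set (Ay := rho ^ 2 + (r - 1) * (2 * y - r - 1)).
  set (Bx := rho ^ 2 + (r + 1) * (2 * x - r + 1)).
  set (By := rho ^ 2 + (r + 1) * (2 * y - r + 1)).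
  assert (HAx : 0 < Ax).
  { unfold Ax. assert (Hz : r - rho <= x <= r + rho) by lra. pose proof (Ex x 1 Hz).
    pose proof (pow2_ge_0 (semi_im r rho x)). assert (1 < x) by (unfold rho in *; lra). nra. }
  assert (HAy : 0 < Ay).
  { unfold Ay. assert (Hz : r - rho <= y <= r + rho) by lra. pose proof (Ex y 1 Hz).
    pose proof (pow2_ge_0 (semi_im r rho y)). assert (1 < y) by (unfold rho in *; lra). nra. }
  assert (HBx : 0 < Bx).
  { unfold Bx. assert (Hz : r - rho <= x <= r + rho) by lra. pose proof (Ex x (-1) Hz).
    pose proof (pow2_ge_0 (semi_im r rho x)). assert (1 < x) by (unfold rho in *; lra). nra. }
  assert (HBy : 0 < By).
  { unfold By. assert (Hz : r - rho <= y <= r + rho) by lra. pose proof (Ex y (-1) Hz).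
    pose proof (pow2_ge_0 (semi_im r rho y)). assert (1 < y) by (unfold rho in *; lra). nra. }
  assert (Hprod : Ax * By < Ay * Bx).
  { assert (Ay * Bx - Ax * By = 4 * (y - x) * (r ^ 2 - 1 - rho ^ 2))
      by (unfold Ax, Ay, Bx, By; ring).
    assert (rho < r - 1) by (unfold rho; lra).
    assert (0 < r ^ 2 - 1 - rho ^ 2) by nra. nra. }
  assert (P2 : ln (Ax * By) < ln (Ay * Bx)) by (apply ln_increasing; nra).
  rewrite !ln_mult in P2 by lra.
  assert (D * (ln (rho ^ 2 + 4 * r * x) / 2) < D * (ln (rho ^ 2 + 4 * r * y) / 2))
    by (apply Rmult_lt_compat_l; lra).
  assert ((A + D) * (ln Ax / 2 - ln Bx / 2) < (A + D) * (ln Ay / 2 - ln By / 2))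
    by (apply Rmult_lt_compat_l; lra).
  lra.
Qed.
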